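(* Let $X$ be a compact topological space, let $D\subseteq X$ with $D\neq\emptyset$, let $\overline{D}$ be the closure of $D$ in $X$, and put $\partial D:=\overline{D}\setminus D$. Let $Y$ be a Hausdorff topological space and let $f\colon\overline{D}\to Y$ be a continuous map such that $f(D)$ is open in $Y$. Let $E$ and $F$ be connected subsets of $Y$, let $\overline{F}$ denote the closure of $F$ in $Y$, and write $S^{c}:=Y\setminus S$ for $S\subseteq Y$. Then: (I) If $f(D)\subseteq E\subseteq f(\partial D)^{c}$, then $f(D)=E$. (II) If $E\subseteq f(\partial D)^{c}\subseteq E\cup F$, $f(D)\subseteq F^{c}$, and $f(\partial D)\subseteq \overline{F}$, then $f(D)=E$; moreover $E\neq\emptyset$, $E\cap F=\emptyset$, and $f(D)\subseteq f(\partial D)^{c}$. (III) If $f(\partial D)^{c}=E\cup F$, $F\not\subseteq f(D)$, and $f(\partial D)\subseteq\overline{F}$, then $f(D)=E$; moreover $E\neq\emptyset$, $F\neq\emptyset$, $E\cap F=\emptyset$, and $f(D)\subseteq f(\partial D)^{c}$.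
   Context: Note that $\partial D$ is defined as $\overline{D}\setminus D$; complements are taken in $Y$. *)

(* Defs.v *)
From HB Require Import structures.
From mathcomp Require Import all_boot all_order all_algebra.
From mathcomp Require Import all_classical all_reals all_analysis.
Set Implicit Arguments. Unset Strict Implicit. Unset Printing Implicit Defensive.
Local Open Scope classical_set_scope.

Definition bdry (X : topologicalType) (D : set X) : set X := closure D `\` D.

(* Main.v *)
Require Import Defs.
From HB Require Import structures.
From mathcomp Require Import all_boot all_order all_algebra.
From mathcomp Require Import all_classical all_reals all_analysis.
Local Open Scope classical_set_scope.

Theorem mainTheorem3 (X Y : topologicalType) (D : set X) (f : X -> Y)
  (E F : set Y) :
  compact [set: X] -> D !=set0 -> hausdorff_space Y ->
  {within closure D, continuous f} -> open (f @` D) ->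
  connected E -> connected F ->
  (* (I) *)
  ((f @` D `<=` E /\ E `<=` ~` (f @` bdry D)) -> f @` D = E) /\
  (* (II) *)
  ((E `<=` ~` (f @` bdry D) /\ ~` (f @` bdry D) `<=` E `|` F /\
    f @` D `<=` ~` F /\ f @` bdry D `<=` closure F) ->
   f @` D = E /\ E !=set0 /\ E `&` F = set0 /\ f @` D `<=` ~` (f @` bdry D)) /\
  (* (III) *)
  ((~` (f @` bdry D) = E `|` F /\ ~ (F `<=` f @` D) /\ f @` bdry D `<=` closure F) ->
   f @` D = E /\ E !=set0 /\ F !=set0 /\ E `&` F = set0 /\
   f @` D `<=` ~` (f @` bdry D)).
Proof.
move=> cX [d Dd] hY cf oD cE cF.
have clI : closed (f @` closure D).
  apply: compact_closed => //; apply: continuous_compact => //.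
  exact: subclosed_compact (@closed_closure _ D) cX (@subsetT _ _).
have key : forall G : set Y, connected G -> G `<=` ~` (f @` bdry D) ->
    G `&` f @` D !=set0 -> G `<=` f @` D.
  move=> G cG GB Gne.
  have -> : G = G `&` f @` D; last by move=> y [].
  apply/esym/cG => //; first by exists (f @` D).
  exists (f @` closure D) => //.
  apply/seteqP; split => y.
    move=> [Gy [x Dx fxy]]; split => //; exists x => //; exact: subset_closure.
  move=> [Gy [x cx fx]]; split => //.
  have [Dx|nDx] := pselect (D x); first by exists x.
  by exfalso; apply: (GB y Gy); exists x.
have fDne : f @` D !=set0 by exists (f d); exists d.
have II : (E `<=` ~` (f @` bdry D) /\ ~` (f @` bdry D) `<=` E `|` F /\
    f @` D `<=` ~` F /\ f @` bdry D `<=` closure F) ->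
   f @` D = E /\ E !=set0 /\ E `&` F = set0 /\ f @` D `<=` ~` (f @` bdry D).
  move=> [EB [BEF [DF BF]]].
  have DB : f @` D `<=` ~` (f @` bdry D).
    move=> y fDy By.
    have [z [Fz Dz]] := BF y By (f @` D) (open_nbhs_nbhs (conj oD fDy)).
    exact: (DF z Dz Fz).
  have DE : f @` D `<=` E.
    move=> y fDy; case: (BEF y (DB y fDy)) => // Fy.
    by exfalso; exact: (DF y fDy Fy).
  have ED : E `<=` f @` D.
    apply: key => //; have [y fy] := fDne; exists y; split => //; exact: DE.
  have eq : f @` D = E by apply/seteqP; split.
  split => //; split; first by rewrite -eq.
  split => //; apply/seteqP; split => // y [Ey Fy].
  by apply: (DF y) => //; rewrite eq.
split.
  move=> [DE EB]; apply/seteqP; split => //; apply: key => //.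
  have [y fy] := fDne; exists y; split => //; exact: DE.
split => //.
move=> [BEF [nFD BF]].
have FB : F `<=` ~` (f @` bdry D) by rewrite BEF => y Fy; right.
have FD : f @` D `<=` ~` F.
  move=> y fDy Fy; apply: nFD; apply: key => //; exists y; split => //.
have Fne : F !=set0.
  apply/set0P/eqP => F0; apply: nFD; rewrite F0; exact: sub0set.
have EB : E `<=` ~` (f @` bdry D) by rewrite BEF => y Ey; left.
have BEF' : ~` (f @` bdry D) `<=` E `|` F by rewrite BEF.
have [h1 [h2 [h3 h4]]] := II (conj EB (conj BEF' (conj FD BF))).
by split; [|split; [|split]].
Qed.
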